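(* Let $\mathbb{F}\in\{\mathbb{R},\mathbb{C}\}$, let $A_1,A_2,\ldots$ be a sequence of matrices in $\mathbb{F}^{n\times n}$, let $H$ be a subspace of $\mathbb{F}^n$ invariant under every $A_i$, and let $\nu$ be a vector norm on $\mathbb{F}^n$. Suppose that $\sum_{i=1}^\infty(\max(\nu^0_H(A_i),1)-1)$ converges and that $\sum_{i=1}^\infty(1-\min(\nu^0_H(A_i),1))$ diverges. Let $(C_{p,r})_{r\ge1}$ be any sequence of general products from $A_1,A_2,\ldots$ (as defined below). Then for every $x\in H$, $\lim_{r\to\infty}C_{p,r}x=0$.
   Context: For a subspace $H$ invariant under $A$, the partial norm is $\nu^0_H(A)=\sup_{0\neq x\in H}\nu(Ax)/\nu(x)$ (the operator norm of the restriction of $A$ to $H$). General products: given a permutation $\sigma$ of the positive integers, set $B_i=A_{\sigma(i)}$; for an integer $p\ge0$ and each $r\ge1$, $C_{p,r}$ is a product of the matrices $B_{p+1},\ldots,B_{p+r}$, each used exactly once, taken in some order (the order may be chosen arbitrarily and independently for each $r$). *)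

(* Defs.v *)
From HB Require Import structures.
From mathcomp Require Import all_boot all_order all_algebra all_fingroup.
From mathcomp Require Import complex.
From mathcomp Require Import all_classical all_reals all_analysis.
Set Implicit Arguments. Unset Strict Implicit. Unset Printing Implicit Defensive.
Import Order.TTheory GRing.Theory Num.Theory.
Import numFieldNormedType.Exports.
Local Open Scope classical_set_scope.
Local Open Scope ring_scope.

(* The scalar field F ∈ {ℝ, ℂ}: [Fld R true] is R, [Fld R false] is R[i]. *)
Definition Fld (R : realType) (b : bool) : numFieldType :=
  if b then (R : numFieldType) else (R[i] : numFieldType).

Definition modF (R : realType) (b : bool) : Fld R b -> R :=
  match b as b' return Fld R b' -> R with
  | true => fun x : R => `|x|
  | false => fun z : R[i] => complex.Re `|z|
  end.

Definition vecnorm (R : realType) (b : bool) (n : nat)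
    (nu : 'cV[Fld R b]_n -> R) : Prop :=
  [/\ forall x, 0 <= nu x,
      forall x, nu x = 0 -> x = 0,
      forall (a : Fld R b) x, nu (a *: x) = modF a * nu x
    & forall x y, nu (x + y) <= nu x + nu y].

Definition pnorm (R : realType) (b : bool) (n : nat)
    (nu : 'cV[Fld R b]_n -> R) (H : {vspace 'cV[Fld R b]_n})
    (A : 'M[Fld R b]_n) : R :=
  sup [set nu (A *m x) / nu x | x in [set x | (x \in H) && (x != 0)]].

Definition Hinvariant (R : realType) (b : bool) (n : nat)
    (H : {vspace 'cV[Fld R b]_n}) (A : 'M[Fld R b]_n) : Prop :=
  forall x, x \in H -> A *m x \in H.

Definition mxprod (K : pzRingType) (n r : nat) (M : 'I_r -> 'M[K]_n) : 'M[K]_n :=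
  \big[@mulmx K n n n / 1%:M]_(k < r) M k.

(* General product C_{p,r}: with 0-based indexing, A' i = A_{i+1},
   s j = sigma(j+1) - 1 (s a bijection of nat), B' j = A' (s j) = B_{j+1};
   C_{p,r} is a product of B_{p+1},...,B_{p+r} = B' p, ..., B' (p+r-1),
   each used exactly once, in the order given by the permutation tau_r. *)
Definition genprod (K : pzRingType) (n : nat) (A : nat -> 'M[K]_n)
    (s : nat -> nat) (p : nat) (tau : forall r : nat, 'S_r) (r : nat) : 'M[K]_n :=
  mxprod (fun k : 'I_r => A (s (p + tau r k)%N)).

(* Main.v *)
Set Warnings "-notation-overridden,-ambiguous-paths,-notation-incompatible-prefix".
Require Import Defs.
From HB Require Import structures.
From mathcomp Require Import all_boot all_order all_algebra all_fingroup.
From mathcomp Require Import complex.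
From mathcomp Require Import all_classical all_reals all_analysis.
From mathcomp Require Import ring lra.
Import Order.TTheory GRing.Theory Num.Theory.
Import numFieldNormedType.Exports.
Local Open Scope classical_set_scope.
Local Open Scope ring_scope.
Lemma mx_entry_le (R : realType) m n (x : 'M[R]_(m, n)) i j : `|x i j| <= `|x|.
Proof.
have /mapP[k Hk ->] : `|x i j| \in [seq `|x y.1 y.2| | y : 'I_m * 'I_n].
  by apply/mapP; exists (i, j) => //=; rewrite mem_enum.
by rewrite [leRHS]/Num.Def.normr /= mx_normrE; apply/bigmax_geP; right => /=; exists k.
Qed.

Arguments mx_entry_le {R m n}.

Lemma sub_sum_le (R : realType) T (N : T -> R) (add : T -> T -> T) (z : T) I (r : seq I) (F : I -> T) :
  N z = 0 -> (forall x y, N (add x y) <= N x + N y) ->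
  N (\big[add/z]_(i <- r) F i) <= \sum_(i <- r) N (F i).
Proof.
move=> Nz Nt; elim: r => [|a r IH]; first by rewrite !big_nil Nz.
rewrite !big_cons; apply: le_trans (Nt _ _) _; exact: lerD.
Qed.

Lemma real_norm_lb (R : realType) m (N : 'rV[R]_m -> R) :
  (forall x, 0 <= N x) -> (forall x, N x = 0 -> x = 0) ->
  (forall a x, N (a *: x) = `|a| * N x) -> (forall x y, N (x + y) <= N x + N y) ->
  exists2 c, 0 < c & forall x, `|x| <= c * N x.
Proof.
move=> N0 Nd NZ NT.
have Nz : N 0 = 0 by have := NZ 0 0; rewrite scale0r normr0 mul0r.
have NN x : N (- x) = N x by rewrite -scaleN1r NZ normrN normr1 mul1r.
pose K := \sum_(j < m) N (delta_mx 0 j).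
have K0 : 0 <= K by apply: sumr_ge0.
have up x : N x <= K * `|x|.
  rewrite {1}(matrix_sum_delta x) big_ord1.
  apply: le_trans (@sub_sum_le R _ N +%R 0 _ _ _ Nz NT) _.
  rewrite /K mulr_suml; apply: ler_sum => j _.
  by rewrite NZ mulrC ler_wpM2l // mx_entry_le.
have cN : continuous N.
  move=> x; apply/(@cvgrPdist_lt _ _ _ (nbhs x) (nbhs_filter x)) => e e0.
  have Kp : 0 < e / (K + 1) by rewrite divr_gt0 // ltr_wpDl.
  have NB : \forall y \near x, ball x (e / (K + 1)) y by exact: near_ball.
  move: NB; apply: filterS => y; rewrite mx_norm_ball /= => xy.
  have h1 : `|N x - N y| <= N (x - y).
    have t1 : N y <= N x + N (x - y).
      by rewrite -(NN (x - y)) opprB; have := NT x (y - x); rewrite (addrC x) subrK.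
    have t2 : N x <= N y + N (x - y).
      by have := NT y (x - y); rewrite (addrC y) subrK.
    rewrite ler_norml; apply/andP; split; lra.
  apply: le_lt_trans h1 _; apply: le_lt_trans (up _) _.
  have K1 : 0 < K + 1 by rewrite ltr_wpDl.
  rewrite -(ltr_pM2r K1) in xy; rewrite divfK ?gt_eqF // in xy.
  by apply: le_lt_trans xy; rewrite mulrC ler_wpM2l // lerDl.
case: m N N0 Nd NZ NT Nz NN K K0 up cN => [|k] N N0 Nd NZ NT Nz NN K K0 up cN.
  exists 1 => // x; rewrite mul1r (_ : x = 0) ?normr0 //; exact: thinmx0.
pose A := [set x : 'rV[R]_k.+1 | `|x| = 1].
have An : A !=set0.
  pose d : 'rV[R]_k.+1 := delta_mx 0 0.
  have d0 : d != 0.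
    apply/negP => /eqP/matrixP/(_ 0 0); rewrite !mxE !eqxx /= => /eqP.
    by rewrite oner_eq0.
  exists (`|d|^-1 *: d); rewrite /A /= mx_normZ normfV normr_id mulVf //.
  by rewrite normr_eq0.
have Acl : closed A.
  have -> : A = (fun x : 'rV[R]_k.+1 => `|x|) @^-1` [set x : R | x = 1] by [].
  apply: preimage_closed => [y _|]; [exact: norm_continuous | exact: closed_eq].
have Acp : compact A.
  apply: bounded_closed_compact => //.
  by exists 1; split => // M M1 x Ax; rewrite /= (Ax : `|x| = 1) ltW.
have [c0 c0A minc] := compact_EVT_min An Acp (continuous_subspaceT cN).
have c0n : `|c0| = 1 by move: c0A; rewrite inE.
have Nc0 : 0 < N c0.
  rewrite lt0r N0 andbT; apply/eqP => /Nd c00.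
  by move: c0n; rewrite c00 normr0 => /eqP; rewrite eq_sym oner_eq0.
exists (N c0)^-1; first by rewrite invr_gt0.
move=> x; have [->|x0] := eqVneq x 0; first by rewrite normr0 Nz mulr0.
have xn : 0 < `|x| by rewrite normr_gt0.
have := minc (`|x|^-1 *: x).
rewrite inE /A /= mx_normZ normfV normr_id mulVf ?gt_eqF // => /(_ erefl).
rewrite NZ normfV normr_id => h.
rewrite -(ler_pM2l Nc0) mulrA mulfV ?gt_eqF // mul1r.
by rewrite -ler_pdivlMr // mulrC.
Qed.
Local Open Scope complex_scope.
Lemma modF_falseC (R : realType) (x : Fld R false) : `|x : R[i]| = (modF x)%:C.
Proof. by rewrite /modF (normc_def (x : R[i])) /=. Qed.
Lemma modF_false (R : realType) (x : Fld R false) : modF x = Num.sqrt (complex.Re (x : R[i]) ^+ 2 + complex.Im (x : R[i]) ^+ 2).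
Proof. by rewrite /modF (normc_def (x : R[i])). Qed.
Local Close Scope complex_scope.

Lemma modF_ge0 (R : realType) b (x : Fld R b) : 0 <= modF x.
Proof. case: b x => x; first exact: normr_ge0. by rewrite modF_false sqrtr_ge0. Qed.

Lemma modF0 (R : realType) b : modF (0 : Fld R b) = 0.
Proof. case: b; first exact: normr0. by rewrite modF_false /= expr0n /= addr0 sqrtr0. Qed.

Lemma modFM (R : realType) b (x y : Fld R b) : modF (x * y) = modF x * modF y.
Proof.
case: b x y => x y; first exact: normrM.
apply: (@complexI R); rewrite rmorphM /= -!modF_falseC; exact: normrM.
Qed.

Lemma modFD (R : realType) b (x y : Fld R b) : modF (x + y) <= modF x + modF y.
Proof.
case: b x y => x y; first exact: ler_normD.
rewrite -lecR rmorphD /= -!modF_falseC; exact: ler_normD.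
Qed.

Lemma modF_cvg0 (R : realType) b (f : nat -> Fld R b) :
  (forall e : R, 0 < e -> \forall r \near \oo, modF (f r) < e) ->
  f @ \oo --> (0 : Fld R b).
Proof.
case: b f => f h; apply/cvgrPdist_lt => e e0.
  by apply: filterS (h e e0) => r; rewrite sub0r normrN.
move: e0; rewrite ltcE /= => /andP[/eqP Ie Re0].
apply: filterS (h _ Re0) => r; rewrite sub0r normrN modF_falseC ltcE /= -Ie eqxx.
by [].
Qed.

Lemma sqrt_le_sum (R : realType) (a c : R) : Num.sqrt (a ^+ 2 + c ^+ 2) <= `|a| + `|c|.
Proof.
have h : 0 <= `|a| + `|c| by rewrite addr_ge0.
rewrite -(ger0_norm h) -sqrtr_sqr ler_sqrt ?sqr_ge0 //.
rewrite -(real_normK (num_real a)) -(real_normK (num_real c)).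
have := normr_ge0 a; have := normr_ge0 c; nra.
Qed.

Lemma vec_lb (R : realType) b n (nu : 'cV[Fld R b]_n -> R) : vecnorm nu ->
  exists2 c, 0 < c & forall (x : 'cV[Fld R b]_n) (j : 'I_n), modF (x j 0) <= c * nu x.
Proof.
case: b nu => nu [n0 nd nz nt].
  have [c c0 hc] : exists2 c : R, 0 < c & forall v : 'rV[R]_n, `|v| <= c * nu v^T.
    apply: real_norm_lb => [v|v /nd h|a v|v w]; first exact: n0.
    - by rewrite -(trmxK v) h trmx0.
    - by rewrite linearZ nz.
    - by rewrite linearD nt.
  exists c => // x j; have := hc x^T; rewrite trmxK => h.
  apply: le_trans h; have := mx_entry_le (x^T : 'rV[R]_n) 0 j; by rewrite mxE.
pose phi (v : 'rV[R]_(n + n)) : 'cV[Fld R false]_n :=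
  \col_j (Complex (lsubmx v 0 j) (rsubmx v 0 j) : R[i]).
have phiZ a v : phi (a *: v) = (a%:C)%C *: phi v.
  apply/matrixP => i j; rewrite !mxE /=.
  by apply/eqP; rewrite eq_complex /= !mul0r subr0 addr0 !eqxx.
have phiD v w : phi (v + w) = phi v + phi w.
  apply/matrixP => i j; rewrite !mxE /=.
  by [].
have modFr (a : R) : modF ((a%:C)%C : Fld R false) = `|a|.
  by rewrite modF_false /= expr0n /= addr0 sqrtr_sqr.
have [c c0 hc] : exists2 c : R, 0 < c & forall v : 'rV[R]_(n + n), `|v| <= c * nu (phi v).
  apply: real_norm_lb => [v|v /nd h|a v|v w]; first exact: n0.
  - rewrite -(hsubmxK v).
    have hl : lsubmx v = 0.
      apply/rowP => k; have := f_equal (fun M : 'cV[Fld R false]_n => complex.Re (M k 0 : R[i])) h.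
      by rewrite /phi !mxE /= => ->.
    have hr : rsubmx v = 0.
      apply/rowP => k; have := f_equal (fun M : 'cV[Fld R false]_n => complex.Im (M k 0 : R[i])) h.
      by rewrite /phi !mxE /= => ->.
    by rewrite hl hr row_mx0.
  - by rewrite phiZ nz modFr.
  - by rewrite phiD nt.
  exists (c *+ 2); first by rewrite mulrn_wgt0.
  move=> x j.
  pose v : 'rV[R]_(n + n) := row_mx (\row_j complex.Re (x j 0 : R[i])) (\row_j complex.Im (x j 0 : R[i])).
  have xv : phi v = x.
    apply/matrixP => i k; rewrite /phi /v row_mxKl row_mxKr !mxE (ord1 k).
    by case: (x i 0).
  have := hc v; rewrite xv => h.
  rewrite modF_false; apply: le_trans (sqrt_le_sum _ _ _) _.
  rewrite mulrnAl mulr2n; apply: lerD.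
    apply: le_trans h; have := mx_entry_le v 0 (lshift n j).
    by rewrite row_mxEl mxE.
  apply: le_trans h; have := mx_entry_le v 0 (rshift n j).
  by rewrite row_mxEr mxE.
Qed.
Arguments vec_lb {R b n nu}.


Lemma seq_sum_le (R : realType) (F : nat -> R) (L1 L2 : seq nat) :
  uniq L1 -> {subset L1 <= L2} -> uniq L2 -> (forall i, 0 <= F i) ->
  \sum_(i <- L1) F i <= \sum_(i <- L2) F i.
Proof.
move=> u1 s12 u2 F0.
rewrite [X in _ <= X](bigID (fun i => i \in L1)) /=.
have -> : \sum_(i <- L2 | i \in L1) F i = \sum_(i <- L1) F i.
  rewrite -big_filter; apply: perm_big; apply: uniq_perm => //.
    exact: filter_uniq.
  move=> z; rewrite mem_filter; apply/andP/idP => [[]//|h]; split => //.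
  exact: s12.
by rewrite lerDl sumr_ge0.
Qed.

Lemma bound_fin (f : nat -> nat) r : exists N, forall k, (k < r)%N -> (f k < N)%N.
Proof.
elim: r => [|r [N hN]]; first by exists 0%N.
exists (maxn N (f r).+1) => k; rewrite ltnS leq_eqVlt => /orP[/eqP ->|/hN h].
  by rewrite leq_max leqnn orbT.
by rewrite leq_max h.
Qed.

Lemma prod_to0 (R : realType) (a : nat -> R) (s : nat -> nat) p :
  (forall i, 0 <= a i) -> bijective s ->
  cvgn (series (fun i => Num.max (a i) 1 - 1)) ->
  ~ cvgn (series (fun i => 1 - Num.min (a i) 1)) ->
  forall e, 0 < e -> exists r0, forall r, (r0 <= r)%N ->
    \prod_(0 <= k < r) a (s (p + k)%N) < e.
Proof.
move=> a0 [g sg gs] Hu Hv e e0.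
set u := fun i => Num.max (a i) 1 - 1.
set v := fun i => 1 - Num.min (a i) 1.
have u0 i : 0 <= u i by rewrite /u subr_ge0 le_max lexx orbT.
have v0 i : 0 <= v i by rewrite /v subr_ge0 ge_min lexx orbT.
have v1 i : v i <= 1 by rewrite /v lerBlDr lerDl le_min a0 ler01.
have aexp i : a i <= expR (u i - v i).
  rewrite /u /v; case: (leP 1 (a i)) => h.
    rewrite subrr subr0.
    by have := expR_ge1Dx (a i - 1); rewrite addrC subrK.
  rewrite subrr sub0r.
  by have := expR_ge1Dx (- (1 - a i)); rewrite opprB addrC subrK.
set S := limn (series u).
have Sle N : \sum_(i <- iota 0 N) u i <= S.
  have hom : {homo series u : n m / (n <= m)%N >-> n <= m}.
    by apply: nondecreasing_series => k _ _; exact: u0.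
  by have := nondecreasing_cvgn_le hom Hu N; rewrite /series /= /index_iota subn0.
have vunb M : exists N, M < \sum_(i <- iota 0 N) v i.
  case: (pselect (exists N, M < \sum_(i <- iota 0 N) v i)) => // hN.
  exfalso; apply: Hv; apply: nondecreasing_is_cvgn.
    by apply: nondecreasing_series => k _ _; exact: v0.
  exists M => _ [N _ <-]; rewrite leNgt; apply/negP => h; apply: hN.
  by exists N; move: h; rewrite /series /= /index_iota subn0.
have [N hN] := vunb (S + p%:R - ln e).
have [r0 hr0] := bound_fin g N.
exists r0 => r hr.
have sinj : injective s by exact: can_inj sg.
have Hu' : \sum_(0 <= k < r) u (s (p + k)%N) <= S.
  have [Nb hNb] := bound_fin (fun k => s (p + k)%N) r.
  apply: le_trans (Sle Nb).
  rewrite /index_iota subn0 -(big_map (fun k => s (p + k)%N) predT u).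
  apply: seq_sum_le => //; last exact: iota_uniq.
    rewrite map_inj_uniq ?iota_uniq // => k1 k2 /sinj; exact: addnI.
  move=> z /mapP[k]; rewrite mem_iota add0n leq0n /= => kr ->.
  by rewrite mem_iota add0n hNb.
have Hv' : \sum_(i <- iota 0 N) v i - p%:R <= \sum_(0 <= k < r) v (s (p + k)%N).
  have e1 : \sum_(0 <= k < (p + r)%N) v (s k) =
      \sum_(0 <= k < p) v (s k) + \sum_(0 <= k < r) v (s (p + k)%N).
    rewrite (@big_cat_nat _ _ _ p 0 (p + r)%N) ?leq_addr //=; congr (_ + _).
    rewrite -{1}(add0n p) big_addn addKn.
    by apply: eq_bigr => k _; rewrite addnC.
  have e2 : \sum_(0 <= k < p) v (s k) <= p%:R.
    have := @ler_sum _ _ (index_iota 0 p) xpredT (fun k => v (s k)) (fun=> 1)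
      (fun k _ => v1 (s k)).
    by rewrite sumr_const_nat subn0.
  have e3 : \sum_(i <- iota 0 N) v i <= \sum_(0 <= k < (p + r)%N) v (s k).
    rewrite /index_iota subn0 -(big_map s predT v).
    apply: seq_sum_le => //; first exact: iota_uniq.
      move=> z; rewrite mem_iota add0n => zN.
      rewrite -(gs z); apply: map_f; rewrite mem_iota add0n.
      by apply: leq_trans (hr0 _ zN) _; apply: leq_trans hr _; rewrite leq_addl.
    by rewrite map_inj_uniq ?iota_uniq.
  lra.
apply: (@le_lt_trans _ _ (\prod_(0 <= k < r) expR (u (s (p + k)%N) - v (s (p + k)%N)))).
  by apply: ler_prod => k _; rewrite a0 aexp.
rewrite -expR_sum sumrB -(@lnK _ e) ?posrE // ltr_expR.
lra.
Qed.
Arguments prod_to0 {R a s} p.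


Lemma nu0 (R : realType) b n (nu : 'cV[Fld R b]_n -> R) : vecnorm nu -> nu 0 = 0.
Proof.
case=> n0 nd nz nt; have := nz 0 0; rewrite scale0r modF0 mul0r; exact.
Qed.

Arguments nu0 {R b n nu}.

Lemma nu_upper (R : realType) b n (nu : 'cV[Fld R b]_n -> R) : vecnorm nu ->
  forall y, nu y <= \sum_(j < n) modF (y j 0) * nu (delta_mx j 0).
Proof.
move=> Hnu y; have [n0 nd nz nt] := Hnu.
rewrite {1}(matrix_sum_delta y).
under eq_bigr => j _ do rewrite big_ord1.
apply: le_trans (@sub_sum_le R 'cV[Fld R b]_n nu +%R 0 _ _ _ (nu0 Hnu) nt) _.
by apply: ler_sum => j _; rewrite nz.
Qed.
Arguments nu_upper {R b n nu}.


Lemma mat_bound (R : realType) b n (nu : 'cV[Fld R b]_n -> R) c : vecnorm nu ->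
  (forall (x : 'cV[Fld R b]_n) (j : 'I_n), modF (x j 0) <= c * nu x) ->
  forall B : 'M[Fld R b]_n, exists M, forall y, nu (B *m y) <= M * nu y.
Proof.
move=> Hnu hc B; have [n0 nd nz nt] := Hnu.
exists (\sum_(j < n) (\sum_(k < n) modF (B j k) * c) * nu (delta_mx j 0)) => y.
apply: le_trans (nu_upper Hnu _) _.
rewrite mulr_suml; apply: ler_sum => j _.
rewrite mulrAC; apply: ler_wpM2r; first exact: n0.
rewrite mulr_suml mxE.
apply: le_trans (@sub_sum_le R _ (@modF R b) +%R 0 _ _ _ (modF0 _ _) (@modFD R b)) _.
apply: ler_sum => k _; rewrite modFM -mulrA; apply: ler_wpM2l; first exact: modF_ge0.
exact: hc.
Qed.
Arguments mat_bound {R b n nu c}.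


Lemma pnorm_bound (R : realType) b n (nu : 'cV[Fld R b]_n -> R) (H : {vspace 'cV[Fld R b]_n}) c (B : 'M[Fld R b]_n) : vecnorm nu ->
  (forall (x : 'cV[Fld R b]_n) (j : 'I_n), modF (x j 0) <= c * nu x) ->
  forall y, y \in H -> nu (B *m y) <= pnorm nu H B * nu y.
Proof.
move=> Hnu hc y yH; have [n0 nd nz nt] := Hnu.
have [->|y0] := eqVneq y 0; first by rewrite mulmx0 nu0 // mulr0.
have ny : 0 < nu y by rewrite lt0r n0 andbT; apply/eqP => /nd; apply/eqP.
have [M hM] := mat_bound Hnu hc B.
have hs : has_sup [set nu (B *m x) / nu x | x in [set x | (x \in H) && (x != 0)]].
  split; first by exists (nu (B *m y) / nu y); exists y => //=; rewrite yH y0.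
  exists M => _ [x /andP[_ x0] <-].
  have nx : 0 < nu x by rewrite lt0r n0 andbT; apply/eqP => /nd; apply/eqP.
  by rewrite ler_pdivrMr.
have := sup_upper_bound hs; move/(_ (nu (B *m y) / nu y)).
by rewrite -ler_pdivrMr //; apply; exists y => //=; rewrite yH y0.
Qed.
Arguments pnorm_bound {R b n nu H c B}.


Lemma pnorm_ge0 (R : realType) b n (nu : 'cV[Fld R b]_n -> R) (H : {vspace 'cV[Fld R b]_n}) c (B : 'M[Fld R b]_n) y : vecnorm nu ->
  (forall (x : 'cV[Fld R b]_n) (j : 'I_n), modF (x j 0) <= c * nu x) ->
  y \in H -> y != 0 -> 0 <= pnorm nu H B.
Proof.
move=> Hnu hc yH y0; have [n0 nd nz nt] := Hnu.
have ny : 0 < nu y by rewrite lt0r n0 andbT; apply/eqP => /nd; apply/eqP.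
have [M hM] := mat_bound Hnu hc B.
have hs : has_sup [set nu (B *m x) / nu x | x in [set x | (x \in H) && (x != 0)]].
  split; first by exists (nu (B *m y) / nu y); exists y => //=; rewrite yH y0.
  exists M => _ [x /andP[_ x0] <-].
  have nx : 0 < nu x by rewrite lt0r n0 andbT; apply/eqP => /nd; apply/eqP.
  by rewrite ler_pdivrMr.
have hin : [set nu (B *m x) / nu x | x in [set x | (x \in H) && (x != 0)]] (nu (B *m y) / nu y).
  by exists y => //=; rewrite yH y0.
by apply: le_trans (sup_upper_bound hs hin); rewrite divr_ge0.
Qed.
Arguments pnorm_ge0 {R b n nu H c} B {y}.


Lemma prod_bound (R : realType) b n (nu : 'cV[Fld R b]_n -> R) (H : {vspace 'cV[Fld R b]_n})
    (A : nat -> 'M[Fld R b]_n) (a : nat -> R) :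
  (forall i, Hinvariant H (A i)) ->
  (forall i y, y \in H -> nu (A i *m y) <= a i * nu y) -> (forall i, 0 <= a i) ->
  forall r (f : 'I_r -> nat) y, y \in H ->
  (mxprod (fun k => A (f k)) *m y \in H) /\
  nu (mxprod (fun k => A (f k)) *m y) <= (\prod_(k < r) a (f k)) * nu y.
Proof.
move=> Hinv hA a0; elim=> [|r IH] f y yH.
  by rewrite /mxprod !big_ord0 mul1mx mul1r.
have [h1 h2] := IH (fun k => f (lift ord0 k)) y yH.
rewrite /mxprod (@big_ord_recl _ _ (@mulmx _ n n n)) -mulmxA big_ord_recl; split; first exact: Hinv.
apply: le_trans (hA _ _ h1) _; rewrite -mulrA; apply: ler_wpM2l => //.
Qed.
Arguments prod_bound {R b n nu H A a}.


Theorem corollary3p3 (R : realType) (b : bool) (n : nat)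
    (A : nat -> 'M[Fld R b]_n) (H : {vspace 'cV[Fld R b]_n})
    (nu : 'cV[Fld R b]_n -> R) :
  (forall i, Hinvariant H (A i)) ->
  vecnorm nu ->
  cvgn (series (fun i => Num.max (pnorm nu H (A i)) 1 - 1)) ->
  ~ cvgn (series (fun i => 1 - Num.min (pnorm nu H (A i)) 1)) ->
  forall (s : nat -> nat), bijective s ->
  forall (p : nat) (tau : forall r : nat, 'S_r) (x : 'cV[Fld R b]_n),
  x \in H ->
  forall i : 'I_n,
    (fun r => (genprod A s p tau r *m x) i 0) @ \oo --> (0 : Fld R b).
Proof.
move=> Hinv Hnu Hu Hv s sbij p tau x xH i.
have [n0 nd nz nt] := Hnu.
have [c c0 hc] := vec_lb Hnu.
apply: modF_cvg0 => e e0.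
have [->|x0] := eqVneq x 0.
  by apply: nearW => r; rewrite mulmx0 mxE modF0.
have nx : 0 < nu x by rewrite lt0r n0 andbT; apply/eqP => /nd; apply/eqP.
pose a k := pnorm nu H (A k).
have a0 k : 0 <= a k by apply: (pnorm_ge0 (A k) Hnu hc xH x0).
have hA k y : y \in H -> nu (A k *m y) <= a k * nu y.
  by move=> yH; exact: (pnorm_bound Hnu hc _ yH).
have ep : 0 < e / (c * nu x) by rewrite divr_gt0 // mulr_gt0.
have [r0 hr0] := prod_to0 p a0 sbij Hu Hv _ ep.
exists r0 => // r /= hr.
have [_ hb] := prod_bound Hinv hA a0 r (fun k : 'I_r => s (p + tau r k)%N) x xH.
apply: le_lt_trans (hc _ i) _.
have hP : \prod_(k < r) a (s (p + tau r k)%N) = \prod_(0 <= k < r) a (s (p + k)%N).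
  rewrite big_mkord; apply: esym.
  exact: (reindex_inj (h := tau r) (F := fun k : 'I_r => a (s (p + k)%N)) (@perm_inj _ (tau r))).
have := hr0 r hr; rewrite -hP => hlt.
apply: (@le_lt_trans _ _ (c * ((\prod_(k < r) a (s (p + tau r k)%N)) * nu x))).
  by apply: ler_wpM2l; [exact: ltW | exact: hb].
have cnx : 0 < c * nu x by rewrite mulr_gt0.
rewrite -(ltr_pM2l cnx) [X in _ < X]mulrCA mulfV ?gt_eqF // mulr1 in hlt.
by move: hlt; rewrite mulrCA mulrC.
Qed.
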